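(* Let $A$ be a real symmetric $n\times n$ matrix with smallest eigenvalue $\bar\lambda$, $a\in\mathbb{R}^n$, $C$ a real $l\times n$ matrix, $c\in\mathbb{R}^l$, $D$ a real $m\times n$ matrix, $d\in\mathbb{R}^m$. Consider the problem $$\inf\{x^T(A-\bar\lambda I_n)x+a^Tx:\ \|x\|^2\le 1,\ \|Cx-c\|^2\le 1,\ Dx-d\le 0\},$$ and assume its feasible set is nonempty. If $$\ker(A-\bar\lambda I_n)\cap\ker(C)\cap\{v\in\mathbb{R}^n: Dv\le 0,\ a^Tv\le 0\}\ne\{0\},$$ then the problem admits a minimizer $x^*$ with $\|x^*\|=1$.
   Context: Vector inequalities such as $Dv\le 0$ are componentwise. $I_n$ is the $n\times n$ identity matrix. *)

(* Defs.v *)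
From mathcomp Require Import all_boot all_order all_algebra.
From mathcomp Require Import reals.
Set Implicit Arguments. Unset Strict Implicit. Unset Printing Implicit Defensive.
Import Order.TTheory GRing.Theory Num.Theory.
Local Open Scope ring_scope.

Definition vnorm (R : realType) (n : nat) (x : 'cV[R]_n) : R :=
  Num.sqrt (\sum_(i < n) x i 0 ^+ 2).

Definition cV_nonpos (R : realType) (m : nat) (v : 'cV[R]_m) : Prop :=
  forall i : 'I_m, v i 0 <= 0.

Definition smallest_eigenvalue (R : realType) (n : nat) (A : 'M[R]_n) (lam : R) : Prop :=
  eigenvalue A lam /\ (forall mu : R, eigenvalue A mu -> lam <= mu).

Definition qobj (R : realType) (n : nat) (A : 'M[R]_n) (lam : R) (a x : 'cV[R]_n) : R :=
  (x^T *m (A - lam%:M) *m x) 0 0 + (a^T *m x) 0 0.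

Definition qfeasible (R : realType) (n l m : nat) (C : 'M[R]_(l, n)) (c : 'cV[R]_l)
  (D : 'M[R]_(m, n)) (d : 'cV[R]_m) (x : 'cV[R]_n) : Prop :=
  vnorm x ^+ 2 <= 1 /\ vnorm (C *m x - c) ^+ 2 <= 1 /\ cV_nonpos (D *m x - d).

(* Main.v *)
Require Import Defs.
From mathcomp Require Import all_boot all_order all_algebra.
From mathcomp Require Import reals.
From mathcomp Require Import all_classical all_reals all_analysis.
From mathcomp Require Import ring lra.
Import Order.TTheory GRing.Theory Num.Theory.
Import numFieldNormedType.Exports.
Local Open Scope ring_scope.

Section S.
Set Implicit Arguments.
Context {R : realType}.
Context {n : nat}.
Definition ec p q (F : 'rV[R]_n -> 'M[R]_(p,q)) := forall i j, continuous (fun r => F r i j).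
Arguments ec {p q}.

Lemma cont_sum (I : Type) (s : seq I) (F : I -> 'rV[R]_n -> R) :
  (forall i, continuous (F i)) -> continuous (fun r => \sum_(i <- s) F i r).
Proof.
move=> H; elim: s => [|a s IH].
  have -> : (fun r => \sum_(i <- [::]) F i r) = (fun=> 0) by apply: funext => r; rewrite big_nil.
  exact: cst_continuous.
have -> : (fun r => \sum_(i <- a :: s) F i r) = (fun r => F a r + \sum_(i <- s) F i r).
  by apply: funext => r; rewrite big_cons.
move=> x; exact: (continuousD (H a x) (IH x)).
Qed.

Lemma cont_mul (f g : 'rV[R]_n -> R) : continuous f -> continuous g -> continuous (fun r => f r * g r).
Proof. by move=> hf hg x; exact: (continuousM (hf x) (hg x)). Qed.

Lemma ec_mul p q k (F : 'rV[R]_n -> 'M[R]_(p,q)) (G : 'rV[R]_n -> 'M[R]_(q,k)) :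
  ec F -> ec G -> ec (fun r => F r *m G r).
Proof.
move=> hF hG i j; under [X in continuous X]funext do rewrite mxE.
by apply: cont_sum => t; apply: cont_mul.
Qed.

Lemma ec_add p q (F G : 'rV[R]_n -> 'M[R]_(p,q)) : ec F -> ec G -> ec (fun r => F r + G r).
Proof.
move=> hF hG i j; under [X in continuous X]funext do rewrite mxE.
by move=> x; exact: (continuousD (hF i j x) (hG i j x)).
Qed.

Lemma ec_opp p q (F : 'rV[R]_n -> 'M[R]_(p,q)) : ec F -> ec (fun r => - F r).
Proof.
move=> hF i j; under [X in continuous X]funext do rewrite mxE.
by move=> x; exact: (continuousN (hF i j x)).
Qed.

Lemma ec_cst p q (M : 'M[R]_(p,q)) : ec (fun _ => M).
Proof. by move=> i j; exact: cst_continuous. Qed.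

Lemma ec_tr p q (F : 'rV[R]_n -> 'M[R]_(p,q)) : ec F -> ec (fun r => (F r)^T).
Proof. by move=> hF i j; under eq_fun do rewrite mxE; exact: hF. Qed.

Lemma ec_id : ec (fun r => r).
Proof. by move=> i j; exact: coord_continuous. Qed.
End S.
Unset Implicit Arguments.

Lemma vnorm_sq (R : realType) k (y : 'cV[R]_k) : vnorm y ^+ 2 = (y^T *m y) 0 0.
Proof.
rewrite /vnorm sqr_sqrtr; last by apply: sumr_ge0 => i _; exact: sqr_ge0.
by rewrite mxE; apply: eq_bigr => i _; rewrite mxE expr2.
Qed.

Lemma entry_tr11 (R : realType) k (y z : 'cV[R]_k) : (y^T *m z) 0 0 = (z^T *m y) 0 0.
Proof.
have -> : z^T *m y = (y^T *m z)^T by rewrite trmx_mul trmxK.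
by rewrite [RHS]mxE.
Qed.

Lemma vnormE (R : realType) k (y : 'cV[R]_k) : vnorm y = Num.sqrt ((y^T *m y) 0 0).
Proof.
by rewrite /vnorm mxE; congr Num.sqrt; apply: eq_bigr => i _; rewrite mxE expr2.
Qed.

Lemma mxDE (R : realType) p q (X Y : 'M[R]_(p,q)) i j : (X + Y) i j = X i j + Y i j.
Proof. by rewrite mxE. Qed.
Lemma mxZE (R : realType) p q (X : 'M[R]_(p,q)) (t : R) i j : (t *: X) i j = t * X i j.
Proof. by rewrite mxE. Qed.

Lemma trDZ (R : realType) k (x y : 'cV[R]_k) (t : R) : (x + t *: y)^T = x^T + t *: y^T.
Proof. by apply/matrixP => i j; rewrite !mxE. Qed.

Lemma part2 (R : realType) (n l m : nat)
  (A : 'M[R]_n) (lam : R) (a : 'cV[R]_n)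
  (C : 'M[R]_(l, n)) (c : 'cV[R]_l) (D : 'M[R]_(m, n)) (d : 'cV[R]_m) (x0 v : 'cV[R]_n) :
  A^T = A -> v != 0 -> (A - lam%:M) *m v = 0 -> C *m v = 0 ->
  cV_nonpos (D *m v) -> (a^T *m v) 0 0 <= 0 -> qfeasible C c D d x0 ->
  exists xs, qfeasible C c D d xs /\ qobj A lam a xs <= qobj A lam a x0 /\ vnorm xs = 1.
Proof.
move=> AT vn0 Mv Cv Dv av [f1 [f2 f3]].
set M := A - lam%:M in Mv *.
have MT : M^T = M by rewrite /M linearB /= AT tr_scalar_mx.
have vM : v^T *m M = 0 by rewrite -(trmxK (v^T *m M)) trmx_mul trmxK MT Mv trmx0.
set p := (x0^T *m v) 0 0.
set q := (v^T *m v) 0 0.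
set s := (x0^T *m x0) 0 0.
have s1 : s <= 1 by rewrite /s -vnorm_sq.
have q0 : 0 < q.
  have [i vi | H] := pickP (fun i => v i 0 != 0); last first.
    move/negP: vn0; case; apply/eqP/matrixP => i j; rewrite ord1 mxE.
    by apply/eqP; move: (H i) => /= /negbFE.
  rewrite /q mxE (bigD1 i) //=.
  have h1 : 0 < v^T 0 i * v i 0 by rewrite mxE -expr2 exprn_even_gt0.
  have h2 : 0 <= \sum_(j < n | j != i) v^T 0 j * v j 0.
    by apply: sumr_ge0 => j _; rewrite mxE -expr2 sqr_ge0.
  lra.
set Dl := p ^+ 2 + q * (1 - s).
have Dl0 : 0 <= Dl by rewrite /Dl; apply: addr_ge0; [exact: sqr_ge0| nra].
set u := Num.sqrt Dl.
have u0 : 0 <= u := sqrtr_ge0 _.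
have u2 : u ^+ 2 = Dl by rewrite sqr_sqrtr.
set t := (u - p) / q.
have t0 : 0 <= t.
  apply: divr_ge0; last exact: ltW.
  have : p ^+ 2 <= u ^+ 2 by rewrite u2 /Dl lerDl; nra.
  nra.
have tq : q * t = u - p by rewrite /t mulrC divfK // gt_eqF.
have E1 : ((x0 + t *: v)^T *m (x0 + t *: v)) 0 0 = 1.
  rewrite trDZ mulmxDl !mulmxDr -!scalemxAl -!scalemxAr.
  rewrite !mxDE !mxZE.
  rewrite (@entry_tr11 R n v x0) -/p -/q -/s.
  have : q * (t * t) + 2 * p * t + s - 1 = 0.
    have -> : q * (t * t) + 2 * p * t + s - 1 = ((q * t) ^+ 2 + 2 * p * (q * t) + q * s - q) / q.
      by field; rewrite gt_eqF.
    rewrite tq; apply/eqP; rewrite mulf_eq0; apply/orP; left; apply/eqP.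
    have : (u - p) ^+ 2 + 2 * p * (u - p) + q * s - q = u ^+ 2 - p ^+ 2 - q * (1 - s) by ring.
    by move=> ->; rewrite u2 /Dl; ring.
  move=> H; lra.
exists (x0 + t *: v); split; [split; [|split] | split].
- by rewrite vnorm_sq E1.
- by rewrite mulmxDr -scalemxAr Cv scaler0 addr0.
- move=> i; rewrite mulmxDr -scalemxAr addrAC mxDE mxZE.
  have := f3 i; have := Dv i; nra.
- rewrite /qobj -/M trDZ mulmxDl -scalemxAl vM scaler0 addr0.
  rewrite mulmxDr -scalemxAr -[x0^T *m M *m v]mulmxA Mv mulmx0 scaler0 addr0.
  rewrite [a^T *m _]mulmxDr -scalemxAr mxDE mxZE; nra.
- by rewrite vnormE E1 sqrtr1.
Qed.

Local Open Scope classical_set_scope.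
Lemma box_compact (R : realType) n (S : set 'rV[R]_n) : closed S -> (forall r, S r -> forall i, -1 <= r ord0 i <= 1) -> compact S.
Proof.
move=> Scl sub.
have H := (@rV_compact R n (fun _ => `[-1, 1]%classic) (fun _ => @segment_compact R (-1) 1)).
apply: (subclosed_compact Scl H).
move=> r /sub h i /=; rewrite in_itv /=; exact: h.
Qed.

Lemma part1 (R : realType) (n l m : nat)
  (A : 'M[R]_n) (lam : R) (a : 'cV[R]_n)
  (C : 'M[R]_(l, n)) (c : 'cV[R]_l) (D : 'M[R]_(m, n)) (d : 'cV[R]_m) :
  (exists x : 'cV[R]_n, qfeasible C c D d x) ->
  exists x0, qfeasible C c D d x0 /\ forall x, qfeasible C c D d x -> qobj A lam a x0 <= qobj A lam a x.
Proof.
move=> [x hx].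
pose S := [set r : 'rV[R]_n | qfeasible C c D d r^T].
pose f := fun r : 'rV[R]_n => qobj A lam a r^T.
have S0 : S !=set0 by exists x^T; rewrite /S /= trmxK.
have fc : continuous f.
  have -> : f = fun r => ((r^T^T *m (A - lam%:M) *m r^T) + a^T *m r^T) 0 0.
    by apply: funext => r; rewrite /f /qobj mxDE.
  exact: (ec_add (ec_mul (ec_mul (ec_tr (ec_tr ec_id)) (ec_cst _)) (ec_tr ec_id))
                 (ec_mul (ec_cst _) (ec_tr ec_id)) 0 0).
pose g1 := fun r : 'rV[R]_n => (r^T^T *m r^T) 0 0.
pose g2 := fun r : 'rV[R]_n => ((C *m r^T - c)^T *m (C *m r^T - c)) 0 0.
pose g3 := fun (i : 'I_m) (r : 'rV[R]_n) => (D *m r^T - d) i 0.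
have g1c : continuous g1 := ec_mul (ec_tr (ec_tr ec_id)) (ec_tr ec_id) 0 0.
have g2c : continuous g2.
  have h : ec (fun r : 'rV[R]_n => C *m r^T - c).
    exact: (ec_add (ec_mul (ec_cst _) (ec_tr ec_id)) (ec_opp (ec_cst _))).
  exact: (ec_mul (ec_tr h) h 0 0).
have g3c : forall i, continuous (g3 i).
  move=> i; exact: (ec_add (ec_mul (ec_cst _) (ec_tr ec_id)) (ec_opp (ec_cst _)) i 0).
have SE : S = g1 @^-1` [set y | y <= 1] `&` (g2 @^-1` [set y | y <= 1] `&`
              \bigcap_(i in setT) (g3 i) @^-1` [set y | y <= 0]).
  apply/seteqP; split => r.
    by rewrite /S /= /qfeasible !vnorm_sq => -[h1 [h2 h3]]; split => //; split => // i _; exact: h3.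
  by rewrite /S /= /qfeasible !vnorm_sq => -[h1 [h2 h3]]; split => //; split => // i; exact: h3.
have Scl : closed S.
  rewrite SE; apply: closedI; first exact: (preimage_closed (fun r _ => g1c r) (@closed_le _ 1)).
  apply: closedI; first exact: (preimage_closed (fun r _ => g2c r) (@closed_le _ 1)).
  apply: closed_bigI => i _; exact: (preimage_closed (fun r _ => g3c i r) (@closed_le _ 0)).
have Scp : compact S.
  apply: box_compact.
    exact: Scl.
  move=> r [h1 _] i.
  move: h1; rewrite /vnorm sqr_sqrtr; last by apply: sumr_ge0 => j _; exact: sqr_ge0.
  rewrite (bigD1 i) //= => h.
  have h2 : 0 <= \sum_(j < n | j != i) r^T j 0 ^+ 2 by apply: sumr_ge0 => j _; exact: sqr_ge0.
  rewrite mxE in h; apply/andP; split; nra.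
have [r rS rmin] := EVT_min_rV S0 Scp (continuous_subspaceT fc).
exists r^T; split; first by move: rS; rewrite inE.
move=> y hy; have := rmin y^T; rewrite /f trmxK; by apply; rewrite inE /S /= trmxK.
Qed.


Theorem corollary3p4 (R : realType) (n l m : nat)
  (A : 'M[R]_n) (lam : R) (a : 'cV[R]_n)
  (C : 'M[R]_(l, n)) (c : 'cV[R]_l) (D : 'M[R]_(m, n)) (d : 'cV[R]_m) :
  A^T = A ->
  smallest_eigenvalue A lam ->
  (exists x : 'cV[R]_n, qfeasible C c D d x) ->
  (exists v : 'cV[R]_n,
      v != 0 /\ (A - lam%:M) *m v = 0 /\ C *m v = 0 /\
      cV_nonpos (D *m v) /\ (a^T *m v) 0 0 <= 0) ->
  exists xs : 'cV[R]_n,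
    qfeasible C c D d xs /\
    (forall x : 'cV[R]_n, qfeasible C c D d x -> qobj A lam a xs <= qobj A lam a x) /\
    vnorm xs = 1.
Proof.
move=> AT _ hx [v [vn0 [Mv [Cv [Dv av]]]]].
have [x0 [f0 m0]] := @part1 R n l m A lam a C c D d hx.
have [xs [fs [os ns]]] := @part2 R n l m A lam a C c D d x0 v AT vn0 Mv Cv Dv av f0.
exists xs; split => //; split => // x hx'.
exact: le_trans os (m0 x hx').
Qed.
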